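(* Let $m,N\in\mathbb N$, let $\mathcal B=(\mathcal B_1,\dots,\mathcal B_B)$ be a partition of $\{1,\dots,N\}$ with weights $\omega=(\omega_b)$, $\omega_b\ge1$. Assume $A\in\mathbb R^{m\times N}$ satisfies the $\ell^2_\omega$-BRNSP of order $s\ge\|\omega\|_\infty^2$ with constants $0<\rho<1$, $\tau>0$. Let $x\in\mathbb R^N$ and $y=Ax+e$ with $\|e\|_2\le\eta$. Let $\hat x$ be a solution of $$\min_{z\in\mathbb R^N}\|z\|_{2,1}^{(\omega)}=\sum_{j=1}^B\omega_j\|z[\mathcal B_j]\|_2\quad\text{s.t. }\|Az-y\|_2\le\eta.$$ Then $$\|x-\hat x\|_{2,1}^{(\omega)}\le 2C_\rho\,\sigma_s(x)_{2,1}^{(\omega)}+2D_{\rho,\tau}\sqrt s\,\eta,\qquad \|x-\hat x\|_2\le 2C_\rho\frac{\sigma_s(x)_{2,1}^{(\omega)}}{\sqrt s}+2D_{\rho,\tau}\eta,$$ where $C_\rho=\frac{(1+\rho)^2}{1-\rho}$ and $D_{\rho,\tau}=\frac{3+\rho}{1-\rho}\tau$.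
   Context: Block structure: $\mathcal B=(\mathcal B_1,\dots,\mathcal B_B)$ partition of $\{1,\dots,N\}$; $x[b]=x[\mathcal B_b]$; for $S\subseteq\{1,\dots,B\}$, $x[S]$ equals $x$ on blocks in $S$ and $0$ elsewhere, $S^c$ its complement in $\{1,\dots,B\}$. Weights $\omega_b\ge1$, $\|\omega\|_\infty=\max_b\omega_b$, $\omega(S)=\sum_{b\in S}\omega_b^2$. $\|x\|_{2,p}^{(\omega)}=\big(\sum_b\omega_b^{2-p}\|x[b]\|_2^p\big)^{1/p}$ (note $\|x\|_{2,2}^{(\omega)}=\|x\|_2$). $\|x\|_0^{(\omega)}=\omega(\{b:x[b]\ne0\})$. $\sigma_s(x)_{2,p}^{(\omega)}=\inf\{\|x-z\|_{2,p}^{(\omega)}:\|z\|_0^{(\omega)}\le s\}$. Definition ($\ell^p_\omega$-BRNSP): $A$ satisfies the weighted block $\ell^p$ robust null space property of order $s\ge\|\omega\|_\infty$ with constants $\rho\in(0,1)$, $\tau>0$ if $\|x[S]\|_{2,p}^{(\omega)}\le\frac{\rho}{s^{1-1/p}}\|x[S^c]\|_{2,1}^{(\omega)}+\tau\|Ax\|_2$ for all $x\in\mathbb R^N$ and all $S$ with $\omega(S)\le s$. *)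

(* Defs.v *)
From Stdlib Require Import Reals ClassicalEpsilon.
Open Scope R_scope.

(* Vectors in R^N are functions nat -> R (only indices 0..N-1 matter).
   Block structure: blk i in {0..B-1} is the block of index i in {0..N-1}.
   Block sets S are boolean predicates on {0..B-1}. *)

Fixpoint rsum (n : nat) (f : nat -> R) : R :=
  match n with O => 0 | S k => rsum k f + f k end.

(* (B_1,...,B_B) is a partition of {0..N-1}: every index lies in exactly one
   block (blk is a function), blocks are nonempty. *)
Definition is_block_partition (N B : nat) (blk : nat -> nat) : Prop :=
  (forall i, (i < N)%nat -> (blk i < B)%nat) /\
  (forall b, (b < B)%nat -> exists i, (i < N)%nat /\ blk i = b).

Definition block_norm (N : nat) (blk : nat -> nat) (x : nat -> R) (b : nat) : R :=
  sqrt (rsum N (fun i => if Nat.eqb (blk i) b then x i ^ 2 else 0)).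

Definition norm2 (N : nat) (x : nat -> R) : R := sqrt (rsum N (fun i => x i ^ 2)).

Definition wnorm21 (N B : nat) (blk : nat -> nat) (w : nat -> R) (x : nat -> R) : R :=
  rsum B (fun b => w b * block_norm N blk x b).

(* ||x||_{2,2}^(w) = (sum_b w_b^0 ||x[b]||_2^2)^(1/2) *)
Definition wnorm22 (N B : nat) (blk : nat -> nat) (x : nat -> R) : R :=
  sqrt (rsum B (fun b => block_norm N blk x b ^ 2)).

Definition restrict (blk : nat -> nat) (S : nat -> bool) (x : nat -> R) : nat -> R :=
  fun i => if S (blk i) then x i else 0.

Definition wS (B : nat) (w : nat -> R) (S : nat -> bool) : R :=
  rsum B (fun b => if S b then w b ^ 2 else 0).

(* ||w||_inf = max_b w_b (0 if there are no blocks) *)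
Definition winf (B : nat) (w : nat -> R) : R :=
  (fix go n := match n with O => 0 | S k => Rmax (go k) (w k) end) B.

Definition wnorm0 (N B : nat) (blk : nat -> nat) (w : nat -> R) (x : nat -> R) : R :=
  rsum B (fun b =>
    if excluded_middle_informative
         (exists i, (i < N)%nat /\ blk i = b /\ x i <> 0)
    then w b ^ 2 else 0).

(* Matrix A in R^{m x N} as A k i; (A x)_k. *)
Definition matvec (N : nat) (A : nat -> nat -> R) (x : nat -> R) : nat -> R :=
  fun k => rsum N (fun i => A k i * x i).

Definition is_inf (E : R -> Prop) (l : R) : Prop :=
  (forall r, E r -> l <= r) /\ (forall l', (forall r, E r -> l' <= r) -> l' <= l).

Definition Rinf (E : R -> Prop) : R :=
  epsilon (inhabits 0) (fun l => is_inf E l).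

Definition sigma21 (N B : nat) (blk : nat -> nat) (w : nat -> R) (s : R) (x : nat -> R) : R :=
  Rinf (fun r => exists z, wnorm0 N B blk w z <= s /\
                           r = wnorm21 N B blk w (fun i => x i - z i)).

Definition wBRNSP2 (m N B : nat) (blk : nat -> nat) (w : nat -> R)
    (A : nat -> nat -> R) (s rho tau : R) : Prop :=
  winf B w <= s /\ 0 < rho < 1 /\ 0 < tau /\
  forall (x : nat -> R) (S : nat -> bool),
    wS B w S <= s ->
    wnorm22 N B blk (restrict blk S x) <=
      rho / sqrt s * wnorm21 N B blk w (restrict blk (fun b => negb (S b)) x)
      + tau * norm2 m (matvec N A x).

(* Main.v *)
Require Import Defs.
From Stdlib Require Import Reals ClassicalEpsilon Lra Lia Psatz.
Open Scope R_scope.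

Lemma rsum_ext n f g : (forall i, (i < n)%nat -> f i = g i) -> rsum n f = rsum n g.
Proof. induction n; simpl; intros H; [reflexivity|].
  rewrite IHn by (intros; apply H; lia). rewrite H by lia. reflexivity. Qed.

Lemma rsum_le n f g : (forall i, (i < n)%nat -> f i <= g i) -> rsum n f <= rsum n g.
Proof. induction n; simpl; intros H; [lra|].
  assert (rsum n f <= rsum n g) by (apply IHn; intros; apply H; lia).
  assert (f n <= g n) by (apply H; lia). lra. Qed.

Lemma rsum_plus n f g : rsum n (fun i => f i + g i) = rsum n f + rsum n g.
Proof. induction n; simpl; [lra|]. rewrite IHn; lra. Qed.

Lemma rsum_scal n c f : rsum n (fun i => c * f i) = c * rsum n f.
Proof. induction n; simpl; [lra|]. rewrite IHn; lra. Qed.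

Lemma rsum_zero n : rsum n (fun _ => 0) = 0.
Proof. induction n; simpl; [lra|]. rewrite IHn; lra. Qed.

Lemma rsum_nonneg n f : (forall i, (i < n)%nat -> 0 <= f i) -> 0 <= rsum n f.
Proof. intros H. rewrite <- (rsum_zero n). apply rsum_le; auto. Qed.

Lemma rsum_term n f k : (forall i, (i < n)%nat -> 0 <= f i) -> (k < n)%nat -> f k <= rsum n f.
Proof. induction n; intros H Hk; [lia|]. simpl.
  destruct (Nat.eq_dec k n) as [->|Hne].
  - assert (0 <= rsum n f) by (apply rsum_nonneg; intros; apply H; lia). lra.
  - assert (f k <= rsum n f) by (apply IHn; [intros; apply H; lia| lia]).
    assert (0 <= f n) by (apply H; lia). lra. Qed.

Lemma rsum_exch B N h : rsum B (fun b => rsum N (fun i => h b i)) = rsum N (fun i => rsum B (fun b => h b i)).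
Proof. induction B; simpl. - symmetry; apply rsum_zero.
  - rewrite IHB. rewrite <- rsum_plus. reflexivity. Qed.

Lemma rsum_ind0 n k c : (n <= k)%nat -> rsum n (fun b => if Nat.eqb k b then c else 0) = 0.
Proof. induction n; intros H; simpl; [reflexivity|].
  rewrite IHn by lia. destruct (Nat.eqb_spec k n); [lia|lra]. Qed.

Lemma rsum_ind n k c : (k < n)%nat -> rsum n (fun b => if Nat.eqb k b then c else 0) = c.
Proof. induction n; intros H; simpl; [lia|].
  destruct (Nat.eqb_spec k n).
  - subst. rewrite rsum_ind0 by lia. lra.
  - rewrite IHn by lia. lra. Qed.

Lemma cs2 a b p q : a*b + p*q <= sqrt(a^2+p^2) * sqrt(b^2+q^2).
Proof. rewrite <- sqrt_mult; [| pose proof (pow2_ge_0 a); pose proof (pow2_ge_0 p); lra | pose proof (pow2_ge_0 b); pose proof (pow2_ge_0 q); lra].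
  apply Rle_trans with (Rabs (a*b+p*q)); [apply Rle_abs|].
  rewrite <- sqrt_Rsqr_abs. apply sqrt_le_1_alt. unfold Rsqr.
  assert (0 <= (a*q-p*b)^2) by apply pow2_ge_0. nra. Qed.

Lemma CS n f g : rsum n (fun i => f i * g i) <= sqrt (rsum n (fun i => f i ^2)) * sqrt (rsum n (fun i => g i ^2)).
Proof. induction n; cbn [rsum]. - rewrite sqrt_0; lra.
  - assert (HF: 0 <= rsum n (fun i => f i ^2)) by (apply rsum_nonneg; intros; apply pow2_ge_0).
    assert (HG: 0 <= rsum n (fun i => g i ^2)) by (apply rsum_nonneg; intros; apply pow2_ge_0).
    pose proof (cs2 (sqrt (rsum n (fun i => f i ^2))) (sqrt (rsum n (fun i => g i ^2))) (f n) (g n)) as H.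
    rewrite (pow2_sqrt _ HF), (pow2_sqrt _ HG) in H. lra. Qed.

Definition L2 n (f : nat -> R) := sqrt (rsum n (fun i => f i ^ 2)).

Lemma L2_nonneg n f : 0 <= L2 n f.
Proof. apply sqrt_pos. Qed.

Lemma L2_ext n f g : (forall i, (i < n)%nat -> f i = g i) -> L2 n f = L2 n g.
Proof. intros H; unfold L2; f_equal; apply rsum_ext; intros; rewrite H; auto. Qed.

Lemma L2_tri n f g : L2 n (fun i => f i + g i) <= L2 n f + L2 n g.
Proof.
  assert (HF: 0 <= rsum n (fun i => f i ^2)) by (apply rsum_nonneg; intros; apply pow2_ge_0).
  assert (HG: 0 <= rsum n (fun i => g i ^2)) by (apply rsum_nonneg; intros; apply pow2_ge_0).
  pose proof (L2_nonneg n f). pose proof (L2_nonneg n g).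
  unfold L2 at 1. rewrite <- (sqrt_pow2 (L2 n f + L2 n g)) by lra.
  apply sqrt_le_1_alt.
  rewrite (rsum_ext n _ (fun i => (f i ^2 + (2 * (f i * g i))) + g i ^ 2)) by (intros; ring).
  rewrite !rsum_plus, rsum_scal.
  pose proof (CS n f g). unfold L2.
  replace ((sqrt (rsum n (fun i => f i ^ 2)) + sqrt (rsum n (fun i => g i ^ 2))) ^ 2) with
   (sqrt (rsum n (fun i => f i ^ 2)) ^2 + 2 * (sqrt (rsum n (fun i => f i ^ 2)) * sqrt (rsum n (fun i => g i ^ 2))) + sqrt (rsum n (fun i => g i ^ 2))^2) by ring.
  rewrite !pow2_sqrt by auto. lra. Qed.

Lemma L2_opp n f : L2 n (fun i => - f i) = L2 n f.
Proof. unfold L2; f_equal; apply rsum_ext; intros; ring. Qed.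

Lemma L2_sub n f g : L2 n (fun i => f i - g i) <= L2 n f + L2 n g.
Proof. rewrite <- (L2_opp n g). apply L2_tri. Qed.

Lemma bn_L2 N blk v b : block_norm N blk v b = L2 N (fun i => if Nat.eqb (blk i) b then v i else 0).
Proof. unfold block_norm, L2; f_equal; apply rsum_ext; intros; destruct Nat.eqb; ring. Qed.

Lemma bn_sub N blk f g b : block_norm N blk (fun i => f i - g i) b <= block_norm N blk f b + block_norm N blk g b.
Proof. rewrite !bn_L2. eapply Rle_trans; [|apply L2_sub]. right. apply L2_ext; intros; destruct Nat.eqb; ring. Qed.

Lemma bn_sub2 N blk f g b : block_norm N blk f b <= block_norm N blk (fun i => f i - g i) b + block_norm N blk g b.
Proof. rewrite !bn_L2. eapply Rle_trans; [|apply L2_tri]. right. apply L2_ext; intros; destruct Nat.eqb; ring. Qed.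

Lemma bn_nonneg N blk f b : 0 <= block_norm N blk f b.
Proof. apply sqrt_pos. Qed.

Lemma bn_restrict N blk S v b : block_norm N blk (restrict blk S v) b = if S b then block_norm N blk v b else 0.
Proof. unfold block_norm, restrict. destruct (S b) eqn:E.
  - f_equal. apply rsum_ext. intros. destruct (Nat.eqb_spec (blk i) b); [subst; rewrite E; auto|auto].
  - rewrite (rsum_ext _ _ (fun _ => 0)). rewrite rsum_zero; apply sqrt_0.
    intros. destruct (Nat.eqb_spec (blk i) b); [subst; rewrite E; simpl; ring|auto]. Qed.

Lemma norm2_wnorm22 N B blk v : (forall i, (i < N)%nat -> (blk i < B)%nat) ->
  norm2 N v = wnorm22 N B blk v.
Proof. intros Hb. unfold norm2, wnorm22. f_equal.
  rewrite (rsum_ext B _ (fun b => rsum N (fun i => if Nat.eqb (blk i) b then v i ^ 2 else 0))).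
  2:{ intros. unfold block_norm. apply pow2_sqrt. apply rsum_nonneg. intros; destruct Nat.eqb; [apply pow2_ge_0|lra]. }
  rewrite rsum_exch. apply rsum_ext. intros. rewrite rsum_ind; auto. Qed.

Lemma Rinf_spec E : (exists r, E r) -> (forall r, E r -> 0 <= r) -> is_inf E (Rinf E).
Proof. intros Hne Hlb. unfold Rinf. apply epsilon_spec.
  set (F := fun r => E (-r)).
  assert (Hb : bound F). { exists 0. intros r Hr. apply Hlb in Hr. lra. }
  assert (He : exists r, F r). { destruct Hne as [r Hr]. exists (-r). unfold F. rewrite Ropp_involutive. auto. }
  destruct (completeness F Hb He) as [M [HM1 HM2]].
  exists (-M). split.
  - intros r Hr. assert (F (-r)) by (unfold F; rewrite Ropp_involutive; auto). apply HM1 in H. lra.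
  - intros l' Hl'. assert (M <= -l'). { apply HM2. intros r Hr. apply Hl' in Hr. lra. } lra. Qed.

Lemma inf_bound E sg P a b : is_inf E sg -> 0 < a ->
  (forall r, E r -> P <= a * r + b) -> P <= a * sg + b.
Proof. intros [H1 H2] Ha H.
  assert ((P - b) / a <= sg).
  { apply H2. intros r Hr. apply H in Hr. apply Rmult_le_reg_l with a; auto.
    unfold Rdiv. replace (a * ((P - b) * / a)) with (P - b) by (field; lra). lra. }
  apply Rmult_le_compat_l with (r := a) in H0; [|lra].
  unfold Rdiv in H0. replace (a * ((P - b) * / a)) with (P - b) in H0 by (field; lra). lra. Qed.

Lemma core n (W a c h : nat -> R) (S : nat -> bool) rho K :
 0 < rho < 1 ->
 (forall b, (b<n)%nat -> 0 <= W b) ->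
 (forall b, (b<n)%nat -> a b <= c b + h b) ->
 (forall b, (b<n)%nat -> c b <= a b + h b) ->
 rsum n (fun b => W b * h b) <= rsum n (fun b => W b * c b) ->
 rsum n (fun b => W b * (if S b then a b else 0)) <= rho * rsum n (fun b => W b * (if S b then 0 else a b)) + K ->
 (1 - rho) * rsum n (fun b => W b * a b) <= 2*(1+rho) * rsum n (fun b => W b * (if S b then 0 else c b)) + 2*K.
Proof. intros Hr HW Hac Hca Hhc Hnsp.
  assert (Hsp : forall f, rsum n (fun b => W b * f b) = rsum n (fun b => W b * (if S b then f b else 0)) + rsum n (fun b => W b * (if S b then 0 else f b))).
  { intros f. rewrite <- rsum_plus. apply rsum_ext. intros; destruct (S i); ring. }
  rewrite Hsp in Hhc. rewrite (Hsp c) in Hhc. rewrite Hsp.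
  assert (H1 : rsum n (fun b => W b * (if S b then c b else 0)) <= rsum n (fun b => W b * (if S b then a b else 0)) + rsum n (fun b => W b * (if S b then h b else 0))).
  { rewrite <- rsum_plus. apply rsum_le. intros i Hi. specialize (HW i Hi). specialize (Hca i Hi). destruct (S i); nra. }
  assert (H2 : rsum n (fun b => W b * (if S b then 0 else a b)) <= rsum n (fun b => W b * (if S b then 0 else c b)) + rsum n (fun b => W b * (if S b then 0 else h b))).
  { rewrite <- rsum_plus. apply rsum_le. intros i Hi. specialize (HW i Hi). specialize (Hac i Hi). destruct (S i); nra. }
  set (As := rsum n (fun b => W b * (if S b then a b else 0))) in *.
  set (Ac := rsum n (fun b => W b * (if S b then 0 else a b))) in *.
  set (Cc := rsum n (fun b => W b * (if S b then 0 else c b))) in *.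
  assert (Ac <= 2 * Cc + As) by lra.
  assert ((1 - rho) * Ac <= 2 * Cc + K) by nra.
  nra. Qed.

Lemma winf_ge n w k : (k < n)%nat -> w k <= winf n w.
Proof. induction n; intros H; [lia|].
  change (winf (S n) w) with (Rmax (winf n w) (w n)).
  destruct (Nat.eq_dec k n) as [->|Hn]; [apply Rmax_r|].
  eapply Rle_trans; [apply IHn; lia|apply Rmax_l]. Qed.

Lemma matvec_sub N A x z k : matvec N A (fun i => x i - z i) k = matvec N A x k - matvec N A z k.
Proof. unfold matvec.
  rewrite (rsum_ext N _ (fun i => A k i * x i + (-1) * (A k i * z i))) by (intros; ring).
  rewrite rsum_plus, rsum_scal. ring. Qed.

Theorem mainTheorem5
  (m N B : nat) (blk : nat -> nat) (w : nat -> R)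
  (Hpart : is_block_partition N B blk)
  (Hw : forall b, (b < B)%nat -> 1 <= w b)
  (A : nat -> nat -> R) (s rho tau : R)
  (Hs : winf B w ^ 2 <= s)
  (HNSP : wBRNSP2 m N B blk w A s rho tau)
  (x e y xhat : nat -> R) (eta : R)
  (Hy : forall k, (k < m)%nat -> y k = matvec N A x k + e k)
  (He : norm2 m e <= eta)
  (Hfeas : norm2 m (fun k => matvec N A xhat k - y k) <= eta)
  (Hmin : forall z : nat -> R,
      norm2 m (fun k => matvec N A z k - y k) <= eta ->
      wnorm21 N B blk w xhat <= wnorm21 N B blk w z) :
  let C := (1 + rho) ^ 2 / (1 - rho) in
  let D := (3 + rho) / (1 - rho) * tau in
  wnorm21 N B blk w (fun i => x i - xhat i)
    <= 2 * C * sigma21 N B blk w s x + 2 * D * sqrt s * eta /\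
  norm2 N (fun i => x i - xhat i)
    <= 2 * C * sigma21 N B blk w s x / sqrt s + 2 * D * eta.
Proof.
  intros C D.
  destruct HNSP as [Hwinf [[Hr0 Hr1] [Ht HN]]].
  assert (Hs0 : 0 <= s) by (pose proof (pow2_ge_0 (winf B w)); lra).
  assert (Heta : 0 <= eta) by (pose proof (sqrt_pos (rsum m (fun i => e i ^ 2))); unfold norm2 in He; lra).
  assert (HC : 0 < C) by (unfold C; apply Rdiv_lt_0_compat; [apply pow_lt|]; lra).
  assert (HD : 0 < D) by (unfold D; apply Rmult_lt_0_compat; [apply Rdiv_lt_0_compat|]; lra).
  set (E := fun r => exists z, wnorm0 N B blk w z <= s /\ r = wnorm21 N B blk w (fun i => x i - z i)).
  assert (HE0 : forall r, E r -> 0 <= r).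
  { intros r [z [_ ->]]. unfold wnorm21. apply rsum_nonneg. intros b Hb. pose proof (Hw b Hb).
    pose proof (bn_nonneg N blk (fun i => x i - z i) b). nra. }
  assert (HEne : exists r, E r).
  { exists (wnorm21 N B blk w (fun i => x i - 0)). exists (fun _ => 0). split; auto.
    unfold wnorm0. rewrite (rsum_ext _ _ (fun _ => 0)). rewrite rsum_zero; lra.
    intros b Hb. destruct excluded_middle_informative as [[i [_ [_ Hi]]]|]; [lra|auto]. }
  assert (Hinf : is_inf E (sigma21 N B blk w s x)) by (apply Rinf_spec; auto).
  assert (Hsg0 : 0 <= sigma21 N B blk w s x) by (apply (proj2 Hinf); auto).
  destruct (Nat.eq_dec B 0) as [HB0|HB0].
  { subst B. assert (HN0 : N = 0%nat).
    { destruct N; auto. destruct Hpart as [Hp _]. specialize (Hp 0%nat ltac:(lia)). lia. }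
    subst N. unfold wnorm21, norm2. cbn [rsum]. rewrite sqrt_0.
    pose proof (sqrt_pos s). split.
    - assert (0 <= 2 * C * sigma21 0 0 blk w s x) by nra.
      assert (0 <= 2 * D * sqrt s * eta) by (apply Rmult_le_pos; [nra|lra]). lra.
    - assert (0 <= 2 * C * sigma21 0 0 blk w s x / sqrt s).
      { unfold Rdiv. apply Rmult_le_pos. nra. destruct (Req_dec (sqrt s) 0) as [->|Hn].
        rewrite Rinv_0; lra. left; apply Rinv_0_lt_compat; lra. }
      nra. }
  assert (Hs1 : 1 <= s).
  { pose proof (winf_ge B w (B-1) ltac:(lia)). pose proof (Hw (B-1)%nat ltac:(lia)). nra. }
  set (rs := sqrt s).
  assert (Hrs : rs * rs = s) by (apply sqrt_sqrt; lra).
  assert (Hrs0 : 0 < rs) by (apply sqrt_lt_R0; lra).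
  assert (Hxf : norm2 m (fun k => matvec N A x k - y k) <= eta).
  { replace (norm2 m (fun k => matvec N A x k - y k)) with (norm2 m e); auto.
    unfold norm2. f_equal. apply rsum_ext. intros k Hk. rewrite Hy by auto. ring. }
  pose proof (Hmin x Hxf) as Hminx.
  set (v := fun i => x i - xhat i).
  assert (HAv : norm2 m (matvec N A v) <= 2 * eta).
  { assert (norm2 m (matvec N A v) = L2 m (fun k => (matvec N A x k - y k) - (matvec N A xhat k - y k))).
    { unfold norm2, L2. f_equal. apply rsum_ext. intros k Hk. unfold v. rewrite matvec_sub. f_equal. ring. }
    rewrite H. eapply Rle_trans; [apply L2_sub|]. unfold L2. fold (norm2 m (fun k => matvec N A x k - y k)).
    fold (norm2 m (fun k => matvec N A xhat k - y k)). lra. }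
  assert (HAv0 : 0 <= norm2 m (matvec N A v)) by apply sqrt_pos.

  assert (HNSP1 : forall S, wS B w S <= s ->
    rsum B (fun b => w b * (if S b then block_norm N blk v b else 0)) <=
    rho * rsum B (fun b => w b * (if S b then 0 else block_norm N blk v b)) + rs * tau * norm2 m (matvec N A v)).
  { intros S HS. pose proof (HN v S HS) as H.
    assert (Hc : wnorm21 N B blk w (restrict blk (fun b => negb (S b)) v) = rsum B (fun b => w b * (if S b then 0 else block_norm N blk v b))).
    { unfold wnorm21; apply rsum_ext; intros; rewrite bn_restrict; destruct (S i); simpl; reflexivity. }
    rewrite Hc in H. fold rs in H.
    set (Ac := rsum B (fun b => w b * (if S b then 0 else block_norm N blk v b))) in *.
    rewrite (rsum_ext B _ (fun b => (fun b => if S b then w b else 0) b * (fun b => block_norm N blk (restrict blk S v) b) b)).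
    2:{ intros; rewrite bn_restrict; destruct (S i); ring. }
    eapply Rle_trans; [apply (CS B (fun b => if S b then w b else 0) (fun b => block_norm N blk (restrict blk S v) b))|].
    cbv beta.
    replace (rsum B (fun i => (if S i then w i else 0) ^ 2)) with (wS B w S).
    2:{ unfold wS. apply rsum_ext. intros; destruct (S i); ring. }
    change (sqrt (rsum B (fun i => block_norm N blk (restrict blk S v) i ^ 2))) with (wnorm22 N B blk (restrict blk S v)).
    assert (sqrt (wS B w S) <= rs) by (apply sqrt_le_1_alt; auto).
    assert (0 <= wnorm22 N B blk (restrict blk S v)) by apply sqrt_pos.
    apply Rle_trans with (rs * wnorm22 N B blk (restrict blk S v)). apply Rmult_le_compat_r; auto.
    apply Rle_trans with (rs * (rho / rs * Ac + tau * norm2 m (matvec N A v))). apply Rmult_le_compat_l; lra.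
    right. field. lra. }
  assert (Hl1 : forall S, wS B w S <= s ->
     (1 - rho) * wnorm21 N B blk w v <= 2*(1+rho) * rsum B (fun b => w b * (if S b then 0 else block_norm N blk x b)) + 2 * (rs * tau * norm2 m (matvec N A v))).
  { intros S HS. unfold wnorm21. apply core with (h := block_norm N blk xhat).
    - lra.
    - intros b Hb; pose proof (Hw b Hb); lra.
    - intros; apply bn_sub.
    - intros; apply bn_sub2.
    - exact Hminx.
    - apply HNSP1; auto. }
  assert (Hl1E : forall r, E r -> (1 - rho) * wnorm21 N B blk w v <= 2*(1+rho)*r + 2*(rs*tau*(2*eta))).
  { intros r [z [Hz ->]].
    set (S := fun b => if excluded_middle_informative (exists i, (i < N)%nat /\ blk i = b /\ z i <> 0) then true else false).
    assert (HS : wS B w S <= s).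
    { replace (wS B w S) with (wnorm0 N B blk w z); auto. unfold wnorm0, wS, S. apply rsum_ext.
      intros; destruct excluded_middle_informative; auto. }
    pose proof (Hl1 S HS) as H1.
    assert (H2 : rsum B (fun b => w b * (if S b then 0 else block_norm N blk x b)) <= wnorm21 N B blk w (fun i => x i - z i)).
    { unfold wnorm21. apply rsum_le. intros b Hb. pose proof (Hw b Hb). unfold S. destruct excluded_middle_informative as [_|Hne].
      - pose proof (bn_nonneg N blk (fun i => x i - z i) b). nra.
      - right. f_equal. unfold block_norm. f_equal. apply rsum_ext. intros i Hi. destruct (Nat.eqb_spec (blk i) b); auto.
        destruct (Req_dec (z i) 0) as [Hz0|Hz0]. rewrite Hz0; ring. exfalso; apply Hne; eauto. }
    assert (H3 : rs * tau * norm2 m (matvec N A v) <= rs * tau * (2 * eta)).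
    { apply Rmult_le_compat_l; auto. nra. }
    nra. }
  set (T := wnorm21 N B blk w v) in *.
  assert (HT0 : 0 <= T).
  { unfold T, wnorm21. apply rsum_nonneg. intros b Hb. pose proof (Hw b Hb). pose proof (bn_nonneg N blk v b). nra. }
  set (k := / (1 - rho)).
  assert (Hk : k * (1 - rho) = 1) by (unfold k; field; lra).
  assert (Hk0 : 0 < k) by (unfold k; apply Rinv_0_lt_compat; lra).
  assert (HTr : forall r, E r -> T <= k * (2*(1+rho)*r + 2*(rs*tau*(2*eta)))).
  { intros r Hr. replace T with (k * ((1 - rho) * T)) by (rewrite <- Rmult_assoc, Hk; ring).
    apply Rmult_le_compat_l; [lra|]. apply Hl1E; auto. }
  split.
  { apply inf_bound with E; auto. nra.
    intros r Hr. pose proof (HTr r Hr). pose proof (HE0 r Hr).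
    unfold C, D. unfold Rdiv. fold k.
    assert (0 <= k * r * rho * (1 + rho)) by (repeat apply Rmult_le_pos; lra).
    assert (0 <= k * tau * rs * eta * (1 + rho)) by (repeat apply Rmult_le_pos; lra).
    fold rs. nra. }

  assert (Hpb : forall i, (i < N)%nat -> (blk i < B)%nat) by apply Hpart.
  set (a := fun b => block_norm N blk v b).
  assert (Ha0 : forall b, 0 <= a b) by (intros; apply bn_nonneg).
  set (S2 := fun b => if Rlt_dec (w b * T) (a b * s) then true else false).
  assert (HaT : forall b, (b < B)%nat -> w b * a b <= T).
  { intros b Hb. unfold T, wnorm21. apply (rsum_term B (fun b => w b * block_norm N blk v b)); auto.
    intros i Hi. pose proof (Hw i Hi). pose proof (Ha0 i). unfold a in *. nra. }
  assert (HS2 : wS B w S2 <= s).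
  { destruct HT0 as [HTp|HTz].
    - assert (wS B w S2 * T <= s * T).
      { unfold wS. rewrite Rmult_comm, <- rsum_scal.
        unfold T at 2, wnorm21. rewrite <- rsum_scal. apply rsum_le. intros b Hb.
        pose proof (Hw b Hb). pose proof (Ha0 b). unfold S2. destruct Rlt_dec as [Hl|Hl].
        - unfold a in *. nra.
        - rewrite Rmult_0_r; apply Rmult_le_pos; [lra|apply Rmult_le_pos; [lra|apply bn_nonneg]]. }
      apply Rmult_le_reg_r with T; auto.
    - unfold wS. rewrite (rsum_ext _ _ (fun _ => 0)). rewrite rsum_zero; lra.
      intros b Hb. unfold S2. destruct Rlt_dec as [Hl|Hl]; auto.
      exfalso. pose proof (HaT b Hb). pose proof (Hw b Hb). pose proof (Ha0 b). rewrite <- HTz in *. nra. }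
  pose proof (HN v S2 HS2) as HN2. fold rs in HN2.
  assert (HAc : wnorm21 N B blk w (restrict blk (fun b => negb (S2 b)) v) <= T).
  { unfold T, wnorm21. apply rsum_le. intros b Hb. rewrite bn_restrict. pose proof (Hw b Hb).
    pose proof (bn_nonneg N blk v b). destruct (negb (S2 b)); nra. }
  set (Qs := rsum B (fun b => if S2 b then a b ^ 2 else 0)).
  set (Qc := rsum B (fun b => if S2 b then 0 else a b ^ 2)).
  assert (HQs0 : 0 <= Qs) by (apply rsum_nonneg; intros; destruct (S2 i); [apply pow2_ge_0|lra]).
  assert (HQc0 : 0 <= Qc) by (apply rsum_nonneg; intros; destruct (S2 i); [lra|apply pow2_ge_0]).
  assert (Hnv : norm2 N v = sqrt (Qs + Qc)).
  { rewrite (norm2_wnorm22 N B blk v Hpb). unfold wnorm22, Qs, Qc. f_equal. rewrite <- rsum_plus.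
    apply rsum_ext. intros; destruct (S2 i); unfold a; ring. }
  assert (HQs : sqrt Qs = wnorm22 N B blk (restrict blk S2 v)).
  { unfold wnorm22, Qs. f_equal. apply rsum_ext. intros. rewrite bn_restrict. destruct (S2 i); unfold a; ring. }
  assert (HQc : Qc * s <= T * T).
  { apply Rle_trans with (T * rsum B (fun b => w b * (if S2 b then 0 else a b))).
    - unfold Qc. rewrite Rmult_comm, <- !rsum_scal. apply rsum_le. intros b Hb.
      pose proof (Hw b Hb). pose proof (Ha0 b). unfold S2. destruct Rlt_dec as [Hl|Hl]; nra.
    - apply Rmult_le_compat_l; auto.
      unfold T, wnorm21. apply rsum_le. intros b Hb. pose proof (Hw b Hb). pose proof (Ha0 b). change (block_norm N blk v b) with (a b).
      destruct (S2 b); nra. }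
  assert (HsQc : sqrt Qc <= T * / rs).
  { rewrite <- (sqrt_pow2 (T * / rs)). 2:{ apply Rmult_le_pos; auto. left; apply Rinv_0_lt_compat; auto. }
    apply sqrt_le_1_alt. replace ((T * / rs)^2) with (T * T / (rs * rs)) by (field; lra).
    rewrite Hrs. apply Rmult_le_reg_r with s; [lra|]. unfold Rdiv. rewrite Rmult_assoc, Rinv_l, Rmult_1_r by lra. exact HQc. }
  assert (Hsplit : sqrt (Qs + Qc) <= sqrt Qs + sqrt Qc).
  { rewrite <- (sqrt_pow2 (sqrt Qs + sqrt Qc)) by (pose proof (sqrt_pos Qs); pose proof (sqrt_pos Qc); lra).
    apply sqrt_le_1_alt. replace ((sqrt Qs + sqrt Qc)^2) with (sqrt Qs ^ 2 + sqrt Qc ^2 + 2 * sqrt Qs * sqrt Qc) by ring.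
    rewrite !pow2_sqrt by auto. pose proof (sqrt_pos Qs); pose proof (sqrt_pos Qc). nra. }
  set (u := / rs).
  assert (Hu : u * rs = 1) by (unfold u; field; lra).
  assert (Hu0 : 0 < u) by (unfold u; apply Rinv_0_lt_compat; lra).
  assert (HV : norm2 N v <= (1 + rho) * T * u + 2 * tau * eta).
  { rewrite Hnv. eapply Rle_trans; [exact Hsplit|]. rewrite HQs.
    assert (rho / rs * wnorm21 N B blk w (restrict blk (fun b => negb (S2 b)) v) <= rho * u * T).
    { unfold Rdiv; fold u. apply Rmult_le_compat_l; auto. apply Rmult_le_pos; lra. }
    assert (tau * norm2 m (matvec N A v) <= tau * (2 * eta)) by (apply Rmult_le_compat_l; lra).
    fold u in HsQc. nra. }
  replace (2 * C * sigma21 N B blk w s x / rs) with ((2 * C * u) * sigma21 N B blk w s x) by (unfold u, rs, Rdiv; ring).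
  apply (inf_bound E); auto. apply Rmult_lt_0_compat; lra.
  intros r Hr. pose proof (HTr r Hr). pose proof (HE0 r Hr) as Hr0'.
  apply Rle_trans with ((1 + rho) * T * u + 2 * tau * eta); auto.
  assert (HX : (1 + rho) * T * u <= (1 + rho) * u * (k * (2 * (1 + rho) * r + 2 * (rs * tau * (2 * eta))))).
  { replace ((1 + rho) * T * u) with ((1 + rho) * u * T) by ring. apply Rmult_le_compat_l; auto. apply Rmult_le_pos; lra. }
  replace ((1 + rho) * u * (k * (2 * (1 + rho) * r + 2 * (rs * tau * (2 * eta))))) with
    (2 * ((1+rho)^2 * k) * u * r + 4 * (1 + rho) * k * tau * eta * (u * rs)) in HX by ring.
  rewrite Hu in HX.
  unfold C, D, Rdiv. fold k.
  replace (2 * tau * eta) with (2 * tau * eta * (k * (1 - rho))) by (rewrite Hk; ring).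
  nra.
Qed.
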